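(* Let $G_1$ ($n\times k$) and $G_0$ ($n\times l$) be fixed binary matrices such that $\widetilde G=[G_1\ G_0]$ has full column rank $k+l$, let $r=n-k-l$, and let $\mathbf m\in\{0,1\}^k$ be fixed. On the binary defect and erasure channel with the encoding and decoding described in the context, $$P(\widehat{\mathbf m}\neq\mathbf m)\le\sum_{u=d_0}^{n}\beta^u(1-\beta)^{n-u}\sum_{w=d_0}^{u}B_{0,w}\binom{n-w}{u-w}+\sum_{e=d_1}^{n}\alpha^e(1-\alpha)^{n-e}\sum_{w=d_1}^{e}A_w\binom{n-w}{e-w}.$$ If in addition $B_{0,w}\le 2^{-l}\binom nw$ for all $d_0\le w\le n$ and $A_w\le 2^{-r}\binom nw$ for all $d_1\le w\le n$, then $$P(\widehat{\mathbf m}\neq\mathbf m)\le 2^{-l}(1+\beta)^n+2^{-r}(1+\alpha)^n.$$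
   Context: All arithmetic is over $\mathrm{GF}(2)$. $\mathcal C=\{\widetilde G\mathbf x:\mathbf x\in\{0,1\}^{k+l}\}$ is the $[n,k+l]$ code generated by $\widetilde G$, and $A_w$ is its number of codewords of Hamming weight $w$. $d_1$ is the minimum Hamming weight of $G_1\mathbf m'+G_0\mathbf d'$ over all $\mathbf m'\neq\mathbf 0$, $\mathbf d'\in\{0,1\}^l$. $\mathcal C_0^{\perp}=\{\mathbf x\in\{0,1\}^n: G_0^T\mathbf x=\mathbf 0\}$; $B_{0,w}$ is its number of vectors of weight $w$ and $d_0$ its minimum nonzero weight. Binary defect and erasure channel (BDEC) with parameters $(\beta,\alpha)$: each of the $n$ cells is independently defective with probability $\beta$; a defective cell is stuck at $0$ or $1$, each with probability $1/2$, independently. Writing codeword $\mathbf c$ stores $\mathbf c\circ\mathbf s$, where $(\mathbf c\circ\mathbf s)_i=s_i$ if cell $i$ is defective with stuck-at value $s_i$ and $=c_i$ otherwise. Then each of the $n$ stored bits is independently erased with probability $\alpha$ (independently of everything else); $\mathcal V$ is the set of unerased positions and the decoder observes $\mathcal V$ and $\mathbf y^{\mathcal V}=(\mathbf c\circ\mathbf s)^{\mathcal V}$. For a matrix/vector, superscript $\mathcal A$ denotes the rows indexed by the set $\mathcal A$. Encoding: with $\mathcal U$ the set of defects and $\mathbf b^{\mathcal U}=(G_1\mathbf m)^{\mathcal U}+\mathbf s^{\mathcal U}$, find $\mathbf d\in\{0,1\}^l$ with $G_0^{\mathcal U}\mathbf d=\mathbf b^{\mathcal U}$ and write $\mathbf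 c=G_1\mathbf m+G_0\mathbf d$; encoding failure ($E=0$) if no such $\mathbf d$ exists. Decoding: solve $\widetilde G^{\mathcal V}\binom{\widehat{\mathbf m}}{\widehat{\mathbf d}}=\mathbf y^{\mathcal V}$. The event $\{\widehat{\mathbf m}\neq\mathbf m\}$ (recovery failure) is declared if encoding fails, or if the solution set of this linear system contains vectors with different message parts $\widehat{\mathbf m}$. *)

(* Defs.v *)
From HB Require Import structures.
From mathcomp Require Import all_boot all_order all_algebra.
Set Implicit Arguments. Unset Strict Implicit. Unset Printing Implicit Defensive.
Import Order.TTheory GRing.Theory Num.Theory.

Local Open Scope ring_scope.

Notation F2 := ('F_2).

Definition wt (n : nat) (v : 'cV[F2]_n) : nat := #|[set i : 'I_n | v i 0 != 0]|.

Definition Gt (n k l : nat) (G1 : 'M[F2]_(n, k)) (G0 : 'M[F2]_(n, l))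
  : 'M[F2]_(n, k + l) := row_mx G1 G0.

Definition A_w n k l (G1 : 'M[F2]_(n, k)) (G0 : 'M[F2]_(n, l)) (w : nat) : nat :=
  #|[set c : 'cV[F2]_n | (wt c == w) && [exists x : 'cV[F2]_(k + l), Gt G1 G0 *m x == c]]|.

(* d1 = min weight of G1 m' + G0 d' over m' <> 0; convention n+1 if no such m' (k = 0) *)
Definition d1 n k l (G1 : 'M[F2]_(n, k)) (G0 : 'M[F2]_(n, l)) : nat :=
  \big[minn/n.+1]_(m' : 'cV[F2]_k | m' != 0)
     \big[minn/n.+1]_(d' : 'cV[F2]_l) wt (G1 *m m' + G0 *m d').

Definition B0_w n l (G0 : 'M[F2]_(n, l)) (w : nat) : nat :=
  #|[set x : 'cV[F2]_n | (G0^T *m x == 0) && (wt x == w)]|.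

(* d0 = min nonzero weight of C0^perp; convention n+1 if C0^perp = {0} *)
Definition d0 n l (G0 : 'M[F2]_(n, l)) : nat :=
  \big[minn/n.+1]_(x : 'cV[F2]_n | (G0^T *m x == 0) && (x != 0)) wt x.

Definition enc_ok n k l (G1 : 'M[F2]_(n, k)) (G0 : 'M[F2]_(n, l)) (m : 'cV[F2]_k)
  (U : {set 'I_n}) (s : 'cV[F2]_n) (d : 'cV[F2]_l) : bool :=
  [forall i in U, (G0 *m d) i 0 == (G1 *m m) i 0 + s i 0].

(* codeword written by the encoder (some solution d is picked; 0 if encoding fails) *)
Definition codeword n k l (G1 : 'M[F2]_(n, k)) (G0 : 'M[F2]_(n, l)) (m : 'cV[F2]_k)
  (U : {set 'I_n}) (s : 'cV[F2]_n) : 'cV[F2]_n :=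
  match [pick d | enc_ok G1 G0 m U s d] with
  | Some d => G1 *m m + G0 *m d
  | None => G1 *m m
  end.

Definition stored n (c : 'cV[F2]_n) (U : {set 'I_n}) (s : 'cV[F2]_n) : 'cV[F2]_n :=
  \col_i (if i \in U then s i 0 else c i 0).

Definition dec_sol n k l (G1 : 'M[F2]_(n, k)) (G0 : 'M[F2]_(n, l))
  (V : {set 'I_n}) (y : 'cV[F2]_n) (x : 'cV[F2]_(k + l)) : bool :=
  [forall i in V, (Gt G1 G0 *m x) i 0 == y i 0].

Definition fail n k l (G1 : 'M[F2]_(n, k)) (G0 : 'M[F2]_(n, l)) (m : 'cV[F2]_k)
  (U : {set 'I_n}) (s : 'cV[F2]_n) (Er : {set 'I_n}) : bool :=
  let V := ~: Er in
  let y := stored (codeword G1 G0 m U s) U s in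
  ~~ [exists d, enc_ok G1 G0 m U s d]
  || [exists x1, exists x2,
        [&& dec_sol G1 G0 V y x1, dec_sol G1 G0 V y x2 &
            usubmx x1 != usubmx x2 :> 'cV[F2]_k]].

(* P(m^ <> m) on BDEC(beta, alpha): defects iid Bernoulli(beta), stuck values
   iid uniform (only used at defective cells), erasures iid Bernoulli(alpha). *)
Definition Pfail (R : realFieldType) (beta alpha : R) n k l
  (G1 : 'M[F2]_(n, k)) (G0 : 'M[F2]_(n, l)) (m : 'cV[F2]_k) : R :=
  \sum_(U : {set 'I_n}) \sum_(s : 'cV[F2]_n) \sum_(Er : {set 'I_n})
    (beta ^+ #|U| * (1 - beta) ^+ (n - #|U|)%N * (2%:R ^- n)
     * (alpha ^+ #|Er| * (1 - alpha) ^+ (n - #|Er|)%N)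
     * (fail G1 G0 m U s Er)%:R).

(* Main.v *)
Require Import Defs.
From HB Require Import structures.
From mathcomp Require Import all_boot all_order all_algebra.
From mathcomp Require Import zify ring lra.
Set Implicit Arguments. Unset Strict Implicit. Unset Printing Implicit Defensive.
Import Order.TTheory GRing.Theory Num.Theory.
Local Open Scope ring_scope.

Definition supp n (x : 'cV[F2]_n) : {set 'I_n} := [set i | x i 0 != 0].

Lemma bigmin_leq (I : finType) (P : pred I) (F : I -> nat) x0 j :
  P j -> (\big[minn/x0]_(i | P i) F i <= F j)%N.
Proof.
move=> Pj; rewrite unlock /=.
have : j \in index_enum I by rewrite mem_index_enum.
elim: (index_enum I) => //= a r IH; rewrite inE => /orP [/eqP <-|jr].
  by rewrite Pj geq_minl.
case: (P a); last exact: IH.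
by apply: leq_trans (geq_minr _ _) (IH jr).
Qed.

Lemma d0_le n l (G0 : 'M[F2]_(n, l)) (x : 'cV[F2]_n) :
  G0^T *m x == 0 -> x != 0 -> (d0 G0 <= wt x)%N.
Proof. by move=> h1 h2; rewrite /d0; apply: bigmin_leq; rewrite h1 h2. Qed.

Lemma Gt_split n k l (G1 : 'M[F2]_(n, k)) (G0 : 'M[F2]_(n, l)) (z : 'cV[F2]_(k + l)) :
  Gt G1 G0 *m z = G1 *m usubmx z + G0 *m dsubmx z.
Proof. by rewrite -{1}(vsubmxK z) /Gt mul_row_col. Qed.

Lemma d1_le n k l (G1 : 'M[F2]_(n, k)) (G0 : 'M[F2]_(n, l)) (z : 'cV[F2]_(k + l)) :
  usubmx z != 0 -> (d1 G1 G0 <= wt (Gt G1 G0 *m z))%N.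
Proof.
move=> hz; rewrite /d1 Gt_split.
apply: leq_trans (bigmin_leq (fun m0 : 'cV[F2]_k => \big[minn/n.+1]_(d' : 'cV[F2]_l) wt (G1 *m m0 + G0 *m d')) n.+1 hz) _.
exact: (@bigmin_leq _ xpredT _ _ (dsubmx z)).
Qed.

Lemma encbad n k l (G1 : 'M[F2]_(n, k)) (G0 : 'M[F2]_(n, l)) (m : 'cV[F2]_k) U s :
  ~~ [exists d, enc_ok G1 G0 m U s d] ->
  exists x : 'cV[F2]_n, [&& G0^T *m x == 0, x != 0 & supp x \subset U].
Proof.
move=> hne.
pose b : 'cV[F2]_n := G1 *m m + s.
pose A : 'M[F2]_(l, n) := \matrix_(j, i) (if i \in U then G0 i j else 0).
pose bU : 'rV[F2]_n := \row_i (if i \in U then b i 0 else 0).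
have nsub : ~~ (bU <= A)%MS.
  apply/negP => /submxP [v hv]; move/negP: hne; apply; apply/existsP; exists v^T.
  apply/forallP => i; apply/implyP => iU.
  have := congr1 (fun M : 'rV[F2]_n => M 0 i) hv; rewrite !mxE iU => ->.
  apply/eqP; apply: eq_bigr => j _; rewrite !mxE iU mulrC //.
move: nsub; rewrite submxE => /eqP hK.
have [j hj] : exists j, (bU *m cokermx A) 0 j != 0.
  apply/existsP; move/eqP: hK; apply: contraR; rewrite negb_exists => /forallP hall.
  apply/eqP/matrixP => i j; rewrite ord1 mxE; apply/eqP.
  rewrite [X in _ == X]mxE; have := hall j; by rewrite negbK mxE.
exists (\col_i (if i \in U then cokermx A i j else 0) : 'cV[F2]_n).
apply/and3P; split.
- apply/eqP/matrixP => j' i0; rewrite ord1 !mxE.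
  have := congr1 (fun M : 'M[F2]_(l, n) => M j' j) (mulmx_coker A); rewrite !mxE => h.
  transitivity (\sum_i A j' i * cokermx A i j); last exact: h.
  apply: eq_bigr => i _; rewrite !mxE; by case: (i \in U); rewrite ?mul0r ?mulr0.
- apply/negP => /eqP h0; move: hj; rewrite mxE; apply/negP; rewrite negbK.
  apply/eqP; apply: big1 => i _; rewrite mxE.
  have := congr1 (fun M : 'cV[F2]_n => M i 0) h0; rewrite !mxE.
  by case: (i \in U) => [->|_]; rewrite ?mulr0 ?mul0r.
- apply/subsetP => i; rewrite inE mxE; by case: (i \in U).
Qed.

Lemma ambig n k l (G1 : 'M[F2]_(n, k)) (G0 : 'M[F2]_(n, l)) (Er : {set 'I_n})
  (y : 'cV[F2]_n) x1 x2 :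
  dec_sol G1 G0 (~: Er) y x1 -> dec_sol G1 G0 (~: Er) y x2 ->
  usubmx x1 != usubmx x2 :> 'cV[F2]_k ->
  exists c : 'cV[F2]_n,
    [&& [exists z, Gt G1 G0 *m z == c], (d1 G1 G0 <= wt c)%N & supp c \subset Er].
Proof.
move=> /forallP h1 /forallP h2 hne.
exists (Gt G1 G0 *m (x1 - x2)); apply/and3P; split.
- by apply/existsP; exists (x1 - x2).
- apply: d1_le.
  have -> : usubmx (x1 - x2) = usubmx x1 - usubmx x2 :> 'cV[F2]_k.
    by apply/matrixP => i j; rewrite !mxE.
  by rewrite subr_eq0.
- apply/subsetP => i; rewrite inE; apply: contraR => iE.
  have iV : i \in ~: Er by rewrite inE.
  move: (implyP (h1 i) iV) (implyP (h2 i) iV) => /eqP e1 /eqP e2.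
  by rewrite mulmxBr mxE e1 mxE e2 subrr.
Qed.

Lemma card_ge1 (R : realFieldType) (T : finType) (P : pred T) :
  (exists x, P x) -> (1 : R) <= #|[set x | P x]|%:R.
Proof.
move=> [x Px]; rewrite ler1n; apply/card_gt0P; exists x; by rewrite inE.
Qed.

Lemma fail_le (R : realFieldType) n k l (G1 : 'M[F2]_(n, k)) (G0 : 'M[F2]_(n, l))
  (m : 'cV[F2]_k) U s Er :
  ((fail G1 G0 m U s Er)%:R : R) <=
    #|[set x | ((G0^T *m x == 0) && (d0 G0 <= wt x)%N) && (supp x \subset U)]|%:R +
    #|[set c | ([exists z, Gt G1 G0 *m z == c] && (d1 G1 G0 <= wt c)%N)
                && (supp c \subset Er)]|%:R.
Proof.
rewrite /fail; case: (boolP [exists d, enc_ok G1 G0 m U s d]) => hE /=.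
  case: existsP => [[x1 /existsP [x2 /and3P [d1s d2s hne]]]|_]; last first.
    by rewrite addr_ge0.
  have [c /and3P [c1 c2 c3]] := ambig d1s d2s hne.
  apply: (@le_trans _ _ (0 + 1)); first by rewrite add0r.
  rewrite lerD ?ler0n //; apply: card_ge1; exists c; by rewrite c1 c2 c3.
have [x /and3P [x1 x2 x3]] := encbad hE.
apply: (@le_trans _ _ (1 + 0)); first by rewrite addr0.
rewrite lerD ?ler0n //; apply: card_ge1; exists x.
by rewrite x1 x3 d0_le.
Qed.
Lemma count_sup n (S : {set 'I_n}) (u : nat) :
  #|[set U : {set 'I_n} | (S \subset U) && (#|U| == u)]| =
  ((#|S| <= u) * 'C(n - #|S|, u - #|S|))%N.
Proof.
have [Su|Su] := leqP #|S| u; last first.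
  rewrite mul0n; apply: eq_card0 => U; rewrite inE.
  apply/negP => /andP[/subset_leq_card h /eqP e]; lia.
rewrite mul1n.
have -> : [set U : {set 'I_n} | (S \subset U) && (#|U| == u)] =
   (fun B => B :|: S) @: [set B : {set 'I_n} | B \subset ~: S & #|B| == (u - #|S|)%N].
  apply/setP => U; rewrite inE; apply/andP/imsetP.
    move=> [SU /eqP cU]; exists (U :\: S).
      rewrite inE subDset setUCr subsetT /= cardsD (setIidPr SU) cU //.
    by rewrite setUC setDE setUIr setUCr setIT; apply/esym/setUidPr.
  move=> [B]; rewrite inE => /andP[BS /eqP cB] ->; split; first exact: subsetUr.
  rewrite cardsU.
  have -> : B :&: S = set0.
    by apply/setP => i; rewrite !inE; apply/negP => /andP[/(subsetP BS)]; rewrite inE => /negP.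
  rewrite cards0 subn0 cB; apply/eqP; lia.
rewrite card_in_imset; last first.
  move=> B1 B2; rewrite !inE => /andP[B1S _] /andP[B2S _] e.
  have h : forall B : {set 'I_n}, B \subset ~: S -> B = (B :|: S) :\: S.
    move=> B BS; apply/setP => i; rewrite !inE; case: (boolP (i \in B)) => iB /=.
      by have := subsetP BS i iB; rewrite inE => ->.
    by case: (i \in S).

  by rewrite (h _ B1S) (h _ B2S) e.
rewrite cards_draws; congr 'C(_, _).
have := cardsC S; rewrite card_ord; lia.
Qed.

Lemma card_le_n n (U : {set 'I_n}) : (#|U| < n.+1)%N.
Proof. by rewrite ltnS -[X in (_ <= X)%N]card_ord max_card. Qed.

Lemma sum_sup (R : realFieldType) n (S : {set 'I_n}) (g : nat -> R) :
  \sum_(U : {set 'I_n} | S \subset U) g #|U| =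
  \sum_(u < n.+1) g u *+ ((#|S| <= u) * 'C(n - #|S|, u - #|S|))%N.
Proof.
rewrite (partition_big (fun U : {set 'I_n} => (inord #|U| : 'I_n.+1)) xpredT) //=.
apply: eq_bigr => j _.
rewrite -count_sup -sumr_const; apply: eq_big => [U|U]; rewrite ?inE.
  by rewrite -val_eqE /= inordK ?card_le_n.
by move/andP=> [_]; rewrite -val_eqE /= inordK ?card_le_n // => /eqP ->.
Qed.

Lemma sum_eqw (R : realFieldType) (N a : nat) (h : nat -> R) :
  \sum_(w < N) (a == w)%:R * h w = (a < N)%:R * h a.
Proof.
elim: N => [|N IH]; first by rewrite big_ord0 ltn0 mul0r.
rewrite big_ord_recr /= IH.
have -> : (a < N.+1)%N = (a < N)%N || (a == N) by apply/idP/orP; lia.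
case: (ltngtP a N) => [lt|gt|->] /=; rewrite ?mul1r ?mul0r ?addr0 ?add0r //.
Qed.


Lemma card_sumR (R : realFieldType) (T : finType) (P : pred T) :
  (#|[set x | P x]|%:R : R) = \sum_x (P x)%:R.
Proof.
rewrite -sumr_const big_mkcond /=; apply: eq_bigr => x _; rewrite inE; by case: (P x).
Qed.

Lemma key (R : realFieldType) n (f : pred 'cV[F2]_n) (g : nat -> R) :
  \sum_(U : {set 'I_n}) g #|U| * #|[set x | f x && (supp x \subset U)]|%:R =
  \sum_(u < n.+1) g u * \sum_(w < u.+1)
     #|[set x | f x && (wt x == w)]|%:R * 'C(n - w, u - w)%:R.
Proof.
transitivity (\sum_x \sum_(u < n.+1) (f x)%:R *
   (g u * ((wt x <= u)%:R * 'C(n - wt x, u - wt x)%:R))).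
  rewrite (eq_bigr (fun U : {set 'I_n} => \sum_x g #|U| * (f x && (supp x \subset U))%:R)); last first.
    move=> U _; by rewrite (card_sumR R) mulr_sumr.
  rewrite exchange_big /=; apply: eq_bigr => x _.
  transitivity ((f x)%:R * \sum_(U : {set 'I_n} | supp x \subset U) g #|U|).
    rewrite [RHS]mulr_sumr [RHS]big_mkcond /=; apply: eq_bigr => U _.
    by case: (f x); case: (supp x \subset U); rewrite ?mul1r ?mul0r ?mulr0 ?mulr1.
  rewrite sum_sup mulr_sumr; apply: eq_bigr => u _.
  by rewrite -[g u *+ _]mulr_natr natrM /wt /supp.
rewrite exchange_big /=; apply: eq_bigr => u _.
rewrite (eq_bigr (fun x => g u * ((f x)%:R * ((wt x <= u)%:R * 'C(n - wt x, u - wt x)%:R)))); last by move=> x _; rewrite mulrCA.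
rewrite -mulr_sumr; congr (_ * _).
rewrite (eq_bigr (fun w : 'I_u.+1 => \sum_x ((f x && (wt x == w))%:R * 'C(n - w, u - w)%:R : R))); last first.
  by move=> w _; rewrite (card_sumR R) mulr_suml.
rewrite exchange_big /=; apply: eq_bigr => x _; symmetry.
transitivity (\sum_(w < u.+1) (wt x == w)%:R * ((f x)%:R * 'C(n - w, u - w)%:R) : R).
  apply: eq_bigr => w _.
  by case: (f x); case: (wt x == w); rewrite ?mul1r ?mul0r ?mulr0 ?mulr1.
by rewrite (@sum_eqw R u.+1 (wt x) (fun w => (f x)%:R * 'C(n - w, u - w)%:R)) ltnS mulrCA.
Qed.
Lemma binC n u w : (w <= u)%N -> (u <= n)%N ->
  ('C(n, w) * 'C(n - w, u - w) = 'C(n, u) * 'C(u, w))%N.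
Proof.
move=> wu un; apply/eqP.
rewrite -(eqn_pmul2r (_ : (0 < w`! * (u - w)`! * (n - u)`!)%N)); last by rewrite !muln_gt0 !fact_gt0.
have e1 := bin_fact (leq_sub2r w un).
rewrite (_ : (n - w - (u - w) = n - u)%N) in e1; last by lia.
have e2 := bin_fact (leq_trans wu un).
have e3 := bin_fact wu.
have e4 := bin_fact un.
apply/eqP.
transitivity ('C(n, w) * (w`! * ('C(n - w, u - w) * ((u - w)`! * (n - u)`!))))%N.
  ring.
rewrite e1 e2.
transitivity ('C(n, u) * (('C(u, w) * (w`! * (u - w)`!)) * (n - u)`!))%N; last first.
  ring.
by rewrite e3 e4.
Qed.

Lemma sum_binom2 (R : realFieldType) u :
  \sum_(w < u.+1) ('C(u, w)%:R : R) = 2%:R ^+ u.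
Proof.
have := exprDn (1 : R) 1 u; rewrite -[1 + 1]/(2%:R) => ->.
by apply: eq_bigr => w _; rewrite !expr1n mulr1.
Qed.

Lemma bound2 (R : realFieldType) n (a c : R) (D : nat) (N : nat -> nat) :
  0 <= a <= 1 -> 0 <= c ->
  (forall w, (D <= w <= n)%N -> ((N w)%:R : R) <= c * 'C(n, w)%:R) ->
  \sum_(D <= u < n.+1) a ^+ u * (1 - a) ^+ (n - u)%N *
     \sum_(D <= w < u.+1) ((N w)%:R * 'C(n - w, u - w)%:R)
  <= c * (1 + a) ^+ n.
Proof.
move=> /andP[a0 a1] c0 hN.
have p0 : forall u : nat, 0 <= a ^+ u * (1 - a) ^+ (n - u)%N.
  by move=> u; rewrite mulr_ge0 // exprn_ge0 // subr_ge0.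
apply: (@le_trans _ _ (\sum_(u < n.+1) a ^+ u * (1 - a) ^+ (n - u)%N *
     \sum_(w < u.+1) (c * 'C(n, w)%:R * 'C(n - w, u - w)%:R))).
  rewrite big_geq_mkord [leRHS](bigID (fun u : 'I_n.+1 => (D <= u)%N)) /=.
  rewrite -[leLHS]addr0 lerD //; last first.
    by apply: sumr_ge0 => u _; rewrite mulr_ge0 // sumr_ge0 // => w _;
      rewrite !mulr_ge0 ?ler0n.
  apply: ler_sum => u /= Du; rewrite ler_wpM2l //.
  rewrite big_geq_mkord [leRHS](bigID (fun w : 'I_u.+1 => (D <= w)%N)) /=.
  rewrite -[leLHS]addr0 lerD //; last first.
    by apply: sumr_ge0 => w _; rewrite !mulr_ge0 ?ler0n.
  apply: ler_sum => w /= Dw; rewrite ler_wpM2r ?ler0n // hN // Dw /=.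
  have := ltn_ord w; have := ltn_ord u; lia.
rewrite (_ : 1 + a = 1 - a + 2%:R * a); last first.
  by rewrite mulr_natl mulr2n addrA subrK.
rewrite (exprDn (1 - a) (2%:R * a)) mulr_sumr; rewrite le_eqVlt; apply/orP; left; apply/eqP.
apply: eq_bigr => u _.
transitivity (a ^+ u * (1 - a) ^+ (n - u)%N * (c * 'C(n, u)%:R * 2%:R ^+ u)).
  congr (_ * _).
  rewrite -sum_binom2 !mulr_sumr; apply: eq_bigr => w _.
  rewrite -mulrA -natrM binC ?natrM ?mulrA //; last by have := ltn_ord u.
  by have := ltn_ord w.
rewrite exprMn -mulr_natr; ring.
Qed.

Lemma sum_pw (R : realFieldType) n (a : R) :
  \sum_(U : {set 'I_n}) a ^+ #|U| * (1 - a) ^+ (n - #|U|)%N = 1.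
Proof.
have := sum_sup (@set0 'I_n) (fun u => a ^+ u * (1 - a) ^+ (n - u)%N).
rewrite cards0 /=.
rewrite (eq_bigl xpredT) => [->|U]; last by rewrite sub0set.
transitivity ((1 - a + a) ^+ n); last by rewrite subrK expr1n.
rewrite exprDn.
by apply: eq_bigr => u _; rewrite !subn0 mul1n mulrC.
Qed.

Lemma sum_s (R : realFieldType) n : \sum_(s : 'cV[F2]_n) (2%:R ^- n : R) = 1.
Proof.
rewrite sumr_const card_mx card_Fp // muln1 -[_ *+ (2 ^ n)%N]mulr_natr natrX mulVf //.
by rewrite expf_neq0 // pnatr_eq0.
Qed.

Lemma sum3 (R : realFieldType) (I J K : finType) (w : I -> R) (c : J -> R)
  (v : K -> R) (A : I -> R) (B : K -> R) :
  \sum_j c j = 1 -> \sum_i w i = 1 -> \sum_k v k = 1 ->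
  \sum_i \sum_j \sum_k (w i * c j * v k * (A i + B k)) =
  \sum_i w i * A i + \sum_k v k * B k.
Proof.
move=> hc hw hv.
set Q := \sum_k v k * B k.
transitivity (\sum_i \sum_j c j * (w i * A i + w i * Q)).
  apply: eq_bigr => i _; apply: eq_bigr => j _.
  transitivity (\sum_k (c j * (w i * A i) * v k + c j * w i * (v k * B k))).
    by apply: eq_bigr => k _; ring.
  by rewrite big_split /= -!mulr_sumr hv /Q; ring.
transitivity (\sum_i (w i * A i + w i * Q)).
  by apply: eq_bigr => i _; rewrite -mulr_suml hc mul1r.
by rewrite big_split /= -mulr_suml hw mul1r.
Qed.

Lemma cardN' n (P : pred 'cV[F2]_n) D w :
  #|[set x | (P x && (D <= wt x)%N) && (wt x == w)]| =
  if (D <= w)%N then #|[set x | P x && (wt x == w)]| else 0%N.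
Proof.
case: ifP => Dw.
  apply: eq_card => x; rewrite !inE; case: (boolP (wt x == w)) => [/eqP->|];
  by rewrite ?Dw ?andbT ?andbF.
apply: eq_card0 => x; rewrite !inE; case: (boolP (wt x == w)) => [/eqP->|];
by rewrite ?Dw ?andbF.
Qed.

Lemma restrict (R : realFieldType) n (g : nat -> R) (D : nat) (N N' : nat -> nat) :
  (forall w, N' w = if (D <= w)%N then N w else 0%N) ->
  \sum_(u < n.+1) g u * \sum_(w < u.+1) (N' w)%:R * 'C(n - w, u - w)%:R =
  \sum_(D <= u < n.+1) g u * \sum_(D <= w < u.+1) ((N w)%:R * 'C(n - w, u - w)%:R).
Proof.
move=> hN; rewrite big_geq_mkord (bigID (fun u : 'I_n.+1 => (D <= u)%N)) /=.
rewrite [X in _ + X]big1 ?addr0; last first.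
  move=> u Du; rewrite big1 ?mulr0 // => w _; rewrite hN.
  have -> : (D <= w)%N = false by have := ltn_ord w; lia.
  by rewrite mul0r.
apply: eq_bigr => u Du; congr (_ * _).
rewrite big_geq_mkord (bigID (fun w : 'I_u.+1 => (D <= w)%N)) /=.
rewrite [X in _ + X]big1 ?addr0; last first.
  by move=> w Dw; rewrite hN (negbTE Dw) mul0r.
by apply: eq_bigr => w Dw; rewrite hN Dw.
Qed.

Theorem theorem4 (R : realFieldType) (beta alpha : R) (n k l : nat)
  (G1 : 'M['F_2]_(n, k)) (G0 : 'M['F_2]_(n, l)) (m : 'cV['F_2]_k) :
  0 <= beta <= 1 -> 0 <= alpha <= 1 ->
  \rank (Gt G1 G0) = (k + l)%N ->
  let r := (n - k - l)%N in
  let D0 := d0 G0 in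
  let D1 := d1 G1 G0 in
  (Pfail beta alpha G1 G0 m <=
     \sum_(D0 <= u < n.+1) beta ^+ u * (1 - beta) ^+ (n - u)%N *
        \sum_(D0 <= w < u.+1) ((B0_w G0 w)%:R * 'C(n - w, u - w)%:R)
   + \sum_(D1 <= e < n.+1) alpha ^+ e * (1 - alpha) ^+ (n - e)%N *
        \sum_(D1 <= w < e.+1) ((A_w G1 G0 w)%:R * 'C(n - w, e - w)%:R))
  /\
  ((forall w, (D0 <= w <= n)%N -> ((B0_w G0 w)%:R : R) <= 2%:R ^- l * 'C(n, w)%:R) ->
   (forall w, (D1 <= w <= n)%N -> ((A_w G1 G0 w)%:R : R) <= 2%:R ^- r * 'C(n, w)%:R) ->
   Pfail beta alpha G1 G0 m <=
     2%:R ^- l * (1 + beta) ^+ n + 2%:R ^- r * (1 + alpha) ^+ n).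
Proof.
move=> hb ha _ r D0 D1.
pose fU := fun x : 'cV[F2]_n => (G0^T *m x == 0) && (d0 G0 <= wt x)%N.
pose fE := fun c : 'cV[F2]_n => [exists z, Gt G1 G0 *m z == c] && (d1 G1 G0 <= wt c)%N.
have pw0 : forall (a : R) (u : nat), 0 <= a <= 1 -> 0 <= a ^+ u * (1 - a) ^+ (n - u)%N.
  by move=> a u /andP[a0 a1]; rewrite mulr_ge0 // exprn_ge0 // subr_ge0.
have P1 : Pfail beta alpha G1 G0 m <=
     \sum_(D0 <= u < n.+1) beta ^+ u * (1 - beta) ^+ (n - u)%N *
        \sum_(D0 <= w < u.+1) ((B0_w G0 w)%:R * 'C(n - w, u - w)%:R)
   + \sum_(D1 <= e < n.+1) alpha ^+ e * (1 - alpha) ^+ (n - e)%N *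
        \sum_(D1 <= w < e.+1) ((A_w G1 G0 w)%:R * 'C(n - w, e - w)%:R).
  apply: (@le_trans _ _ (\sum_(U : {set 'I_n}) \sum_(s : 'cV[F2]_n) \sum_(Er : {set 'I_n})
     ((beta ^+ #|U| * (1 - beta) ^+ (n - #|U|)%N) * (2%:R ^- n) *
      (alpha ^+ #|Er| * (1 - alpha) ^+ (n - #|Er|)%N) *
      (#|[set x | fU x && (supp x \subset U)]|%:R +
       #|[set c | fE c && (supp c \subset Er)]|%:R)))).
    apply: ler_sum => U _; apply: ler_sum => s _; apply: ler_sum => Er _.
    apply: ler_wpM2l; last exact: fail_le.
    apply: mulr_ge0; last exact: pw0.
    apply: mulr_ge0; first exact: pw0.
    by rewrite invr_ge0 exprn_ge0 ?ler0n.
  rewrite (@sum3 R _ _ _ (fun U : {set 'I_n} => beta ^+ #|U| * (1 - beta) ^+ (n - #|U|)%N)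
     (fun _ : 'cV[F2]_n => 2%:R ^- n)
     (fun Er : {set 'I_n} => alpha ^+ #|Er| * (1 - alpha) ^+ (n - #|Er|)%N)
     (fun U => #|[set x | fU x && (supp x \subset U)]|%:R)
     (fun Er => #|[set c | fE c && (supp c \subset Er)]|%:R)) /=;
    [| exact: sum_s | exact: sum_pw | exact: sum_pw].
  rewrite (@key R n fU (fun u => beta ^+ u * (1 - beta) ^+ (n - u)%N)).
  rewrite (@key R n fE (fun u => alpha ^+ u * (1 - alpha) ^+ (n - u)%N)).
  rewrite (@restrict R n (fun u => beta ^+ u * (1 - beta) ^+ (n - u)%N) D0 (B0_w G0) (fun w => #|[set x | fU x && (wt x == w)]|));
    last by move=> w; exact: cardN'.
  rewrite (@restrict R n (fun u => alpha ^+ u * (1 - alpha) ^+ (n - u)%N) D1 (A_w G1 G0) (fun w => #|[set x | fE x && (wt x == w)]|)) //.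
  move=> w; rewrite cardN'; case: ifP => // _.
  by apply: eq_card => x; rewrite !inE andbC.
split => // hB hA.
apply: le_trans P1 _; apply: lerD.
  apply: bound2 => //; by rewrite invr_ge0 exprn_ge0 ?ler0n.
apply: bound2 => //; by rewrite invr_ge0 exprn_ge0 ?ler0n.
Qed.
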